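(* Every 2-local 1-automorphism of a finite dimensional formally real Jordan algebra $\mathcal{A}$ is an automorphism.
   Context: A real Jordan algebra is formally real if $\sum_i a_i^2=0$ (finite sum) implies each $a_i=0$; $\mathcal{A}$ is unital with identity $1$. A symmetry is $s\in\mathcal{A}$ with $s^2=1$, and $U_s(x)=2s(sx)-x$. A 2-local 1-automorphism is a map $\Delta:\mathcal{A}\to\mathcal{A}$ (not assumed linear) such that for every $x,y\in\mathcal{A}$ there is a symmetry $s$ with $\Delta(x)=U_s(x)$ and $\Delta(y)=U_s(y)$. *)

(* Defs.v *)
From HB Require Import structures.
From mathcomp Require Import all_boot all_order all_algebra.
From mathcomp Require Export reals.
Set Implicit Arguments. Unset Strict Implicit. Unset Printing Implicit Defensive.
Import GRing.Theory Num.Theory.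
Local Open Scope ring_scope.

Section Jordan.
Variables (R : realType) (V : vectType R).

Definition unital_jordan (mul : V -> V -> V) (one : V) : Prop :=
  [/\ forall (a : R) (x y z : V), mul x (a *: y + z) = a *: mul x y + mul x z,
      forall x y, mul x y = mul y x,
      forall x y, mul (mul x y) (mul x x) = mul x (mul y (mul x x))
    & forall x, mul one x = x].

Definition formally_real (mul : V -> V -> V) : Prop :=
  forall s : seq V, \sum_(a <- s) mul a a = 0 -> forall a, a \in s -> a = 0.

Definition symmetry (mul : V -> V -> V) (one s : V) : Prop := mul s s = one.

Definition Uop (mul : V -> V -> V) (s x : V) : V := (mul s (mul s x)) *+ 2 - x.

Definition two_local_1_automorphism (mul : V -> V -> V) (one : V)
    (D : V -> V) : Prop :=
  forall x y : V, exists s : V,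
    [/\ symmetry mul one s, D x = Uop mul s x & D y = Uop mul s y].

Definition jordan_automorphism (mul : V -> V -> V) (D : V -> V) : Prop :=
  [/\ forall (a : R) (x y : V), D (a *: x + y) = a *: D x + D y,
      bijective D
    & forall x y, D (mul x y) = mul (D x) (D y)].

End Jordan.

(* Main.v *)
Require Import Defs.
From HB Require Import structures.
From mathcomp Require Import all_boot all_order all_algebra.
From mathcomp Require Import reals.
From mathcomp Require Import complex.
From mathcomp Require Import ring.
From Stdlib Require Import Classical.
Set Implicit Arguments. Unset Strict Implicit. Unset Printing Implicit Defensive.
Import Order.TTheory GRing.Theory Num.Theory VectorInternalTheory.
Local Open Scope ring_scope.


Section Dual.
Variables (R : comNzRingType) (V : lmodType R).
Definition dual := (R * V)%type.
HB.instance Definition _ := GRing.Zmodule.on dual.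
Definition dmul (p q : dual) : dual := (p.1 * q.1, p.1 *: q.2 + q.1 *: p.2).
Definition done_ : dual := (1, 0).
Lemma dmulA : associative dmul.
Proof. move=> [a u] [b v] [c w]; rewrite /dmul /=; congr pair; first by rewrite mulrA.
by rewrite !scalerDr !scalerA -!addrA [c * a]mulrC [c * b]mulrC. Qed.
Lemma dmulC : commutative dmul.
Proof. by move=> [a u] [b v]; rewrite /dmul /= mulrC addrC. Qed.
Lemma dmul1 : left_id done_ dmul.
Proof. by move=> [a u]; rewrite /dmul /= mul1r scale1r scaler0 addr0. Qed.
Lemma dmulDl : left_distributive dmul +%R.
Proof. move=> [a u] [b v] [c w]; rewrite /dmul /=; congr pair; first by rewrite mulrDl.
by rewrite scalerDl scalerDr !addrA; congr (_ + _); rewrite -!addrA; congr (_ + _); rewrite addrC. Qed.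
Lemma done_neq0 : done_ != 0.
Proof. by apply/eqP => -[] /eqP; rewrite oner_eq0. Qed.
HB.instance Definition _ := GRing.Zmodule_isComNzRing.Build dual dmulA dmulC dmul1 dmulDl done_neq0.
Definition inj (v : V) : dual := (0, v).
Definition sc (a : R) : dual := (a, 0).
Lemma injD u v : inj (u + v) = inj u + inj v. Proof. by apply: injective_projections => /=; rewrite ?addr0. Qed.
Lemma injN u : inj (- u) = - inj u. Proof. by rewrite /inj; congr pair; rewrite oppr0. Qed.
Lemma injB u v : inj (u - v) = inj u - inj v. Proof. by rewrite injD injN. Qed.
Lemma inj0 : inj 0 = 0. Proof. by []. Qed.
Lemma injZ a u : inj (a *: u) = sc a * inj u.
Proof. by rewrite /inj /sc; apply: injective_projections => /=; rewrite ?mulr0 ?scaler0 ?add0r ?addr0. Qed.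
Lemma injMn u n : inj (u *+ n) = inj u *+ n.
Proof. by elim: n => // n IH; rewrite !mulrS injD IH. Qed.
Lemma inj_inj u v : inj u = inj v -> u = v. Proof. by case. Qed.
End Dual.

Definition injE := (injD, injB, injN, injZ, injMn, inj0).

Lemma test (R : comNzRingType) (V : lmodType R) (a b c : V) (r : R) : r *: (a + b) - c *+ 2 = b + r *: a - c - c + r *: b - b.
Proof. apply: (@inj_inj R V); rewrite !injE; ring. Qed.


Section Tr.
Variables (F : fieldType) (V : vectType F).
Definition lin (f : V -> V) := forall a u v, f (a *: u + v) = a *: f u + f v.
Definition mxf (f : V -> V) : 'M[F]_(dim V) := \matrix_i v2r (f (r2v (delta_mx 0 i))).

Lemma lin0 f : lin f -> f 0 = 0.
Proof. move=> hf; have := hf 1 0 0; rewrite scale1r addr0 scale1r => h.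
by have := congr1 (fun x => x - f 0) h; rewrite subrr addrK => <-. Qed.
Lemma linD f : lin f -> forall u v, f (u + v) = f u + f v.
Proof. by move=> hf u v; have := hf 1 u v; rewrite !scale1r. Qed.
Lemma linZ f : lin f -> forall a u, f (a *: u) = a *: f u.
Proof. by move=> hf a u; rewrite -[a *: u]addr0 hf lin0 // addr0. Qed.
Lemma lin_sum f : lin f -> forall n (g : 'I_n -> V), f (\sum_i g i) = \sum_i f (g i).
Proof. by move=> hf n g; apply: (big_morph f (linD hf) (lin0 hf)). Qed.

Lemma mxfP f : lin f -> forall v, v2r (f v) = v2r v *m mxf f.
Proof.
move=> hf v; rewrite -{1}(v2rK v) (row_sum_delta (v2r v)) raddf_sum /= lin_sum //.
rewrite raddf_sum; apply/rowP => j; rewrite !summxE mxE; apply: eq_bigr => i _.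
by rewrite linearZ /= linZ // linearZ /= !mxE -row_sum_delta.
Qed.

Lemma mxf_comp f g : lin f -> lin g -> mxf (fun v => f (g v)) = mxf g *m mxf f.
Proof. by move=> hf hg; apply/row_matrixP => i; rewrite row_mul !rowK mxfP. Qed.

Lemma mxf_ext f g : (forall v, f v = g v) -> mxf f = mxf g.
Proof. by move=> h; apply/row_matrixP => i; rewrite !rowK h. Qed.

Lemma mxf_id : mxf id = 1%:M.
Proof. by apply/row_matrixP => i; rewrite rowK r2vK row1. Qed.

Lemma mxfD f g : mxf (fun v => f v + g v) = mxf f + mxf g.
Proof. by apply/matrixP => i j; rewrite !mxE linearD /= mxE. Qed.

Lemma mxfZ a f : mxf (fun v => a *: f v) = a *: mxf f.
Proof. by apply/matrixP => i j; rewrite !mxE linearZ /= mxE. Qed.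

Lemma mxfN f : mxf (fun v => - f v) = - mxf f.
Proof. by apply/matrixP => i j; rewrite !mxE linearN /= mxE. Qed.

Definition trf f := \tr (mxf f).

Lemma mxtrace_pid n r : (r <= n)%N -> \tr (pid_mx r : 'M[F]_n) = r%:R.
Proof.
move=> rn; rewrite /mxtrace (eq_bigr (fun i : 'I_n => ((i < r)%N)%:R)); last first.
  by move=> i _; rewrite mxE eqxx.
rewrite -natr_sum; congr (_%:R).
rewrite -(big_mkord xpredT (fun i => nat_of_bool (i < r)%N)).
rewrite (@big_cat_nat _ _ _ r 0 n _ _ (leq0n r) rn) /=.
rewrite big_nat_cond (eq_bigr (fun _ => 1%N)); last by move=> i /andP[/andP[_ ->]].
rewrite -big_nat_cond sum_nat_const_nat subn0 muln1.
rewrite big_nat_cond big1 ?addn0 // => i /andP[/andP[ri _] _].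
by rewrite ltnNge ri.
Qed.

Lemma cancel_LU n (L Ub X Y : 'M[F]_n) : L \in unitmx -> Ub \in unitmx ->
  L *m X *m Ub = L *m Y *m Ub -> X = Y.
Proof.
move=> uL uU h; have h1 := congr1 (mulmx (invmx L)) h.
rewrite !mulmxA mulVmx // !mul1mx in h1.
have h2 := congr1 (mulmx^~ (invmx Ub)) h1.
by rewrite /= -!mulmxA mulmxV // !mulmx1 in h2.
Qed.

Lemma tr_idem n (A : 'M[F]_n) : A *m A = A -> \tr A = (\rank A)%:R.
Proof.
move=> hA.
have e := mulmx_ebase A.
set L := col_ebase A in e; set Ub := row_ebase A in e; set r := \rank A in e *.
have uL : L \in unitmx by exact: col_ebase_unit.
have uU : Ub \in unitmx by exact: row_ebase_unit.
have key : pid_mx r *m (Ub *m L) *m pid_mx r = pid_mx r :> 'M_n.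
  have : L *m (pid_mx r *m (Ub *m L) *m pid_mx r) *m Ub = L *m pid_mx r *m Ub.
    by transitivity (A *m A); [rewrite -e !mulmxA | rewrite hA e].
  exact: cancel_LU.
have rn : (r <= n)%N by exact: rank_leq_row.
by rewrite -e mxtrace_mulC mulmxA -(@pid_mx_id F n n n r rn) mulmxA mxtrace_mulC mulmxA key mxtrace_pid.
Qed.
End Tr.

Section Tr2.
Variables (F : numFieldType) (V : vectType F).

Lemma lin_comp (f g : V -> V) : lin f -> lin g -> lin (fun v => f (g v)).
Proof. by move=> hf hg a u v; rewrite hg hf. Qed.

Lemma trf_idem (f : V -> V) : lin f -> (forall v, f (f v) = f v) -> trf f = (\rank (mxf f))%:R.
Proof.
move=> hf hff; apply: tr_idem; rewrite -mxf_comp //.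
by apply: mxf_ext.
Qed.

Lemma trf_idem_ge0 (f : V -> V) : lin f -> (forall v, f (f v) = f v) -> 0 <= trf f.
Proof. by move=> hf hff; rewrite trf_idem // ler0n. Qed.

Lemma trf_idem_gt0 (f : V -> V) v : lin f -> (forall v, f (f v) = f v) -> f v != 0 -> 0 < trf f.
Proof.
move=> hf hff fv; rewrite trf_idem // ltr0n lt0n mxrank_eq0.
apply/eqP => h0; move/eqP: fv; apply; apply: v2r_inj; by rewrite mxfP // h0 mulmx0 linear0.
Qed.

Lemma trfD (f g : V -> V) : trf (fun v => f v + g v) = trf f + trf g.
Proof. by rewrite /trf mxfD mxtraceD. Qed.
Lemma trfZ a (f : V -> V) : trf (fun v => a *: f v) = a * trf f.
Proof. by rewrite /trf mxfZ mxtraceZ. Qed.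
Lemma trf_ext (f g : V -> V) : (forall v, f v = g v) -> trf f = trf g.
Proof. by move=> h; rewrite /trf (mxf_ext h). Qed.

Lemma trf_conj (f g : V -> V) : lin f -> lin g -> (forall v, g (g v) = v) ->
  trf (fun v => g (f (g v))) = trf f.
Proof.
move=> hf hg hgg.
have e1 : mxf (fun v => g (f (g v))) = mxf (fun v => f (g v)) *m mxf g := mxf_comp hg (lin_comp hf hg).
have e2 : mxf (fun v => f (g v)) = mxf g *m mxf f := mxf_comp hf hg.
have e3 : mxf g *m mxf g = 1%:M.
  by rewrite -(mxf_comp hg hg) (mxf_ext hgg) -mxf_id.
by rewrite /trf e1 e2 mxtrace_mulC mulmxA e3 mul1mx.
Qed.
End Tr2.


Section C.
Variable R : realType.
Local Notation rc := (real_complex R).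
Local Notation I := (Complex (0 : R) 1).

Lemma real_root_or_quad (p : {poly R}) : (1 < size p)%N ->
  (exists l, root p l) \/
  (exists a b r, b != 0 /\ p = r * (('X - a%:P)^+2 + (b^+2)%:P)).
Proof.
move=> hp.
have [z hz] : exists z : R[i], root (map_poly rc p) z.
  by apply/closed_rootP; rewrite size_map_poly gtn_eqF.
case: z hz => a b hz.
have [b0 | hb] := eqVneq b 0.
  left; exists a; move: hz; rewrite b0.
  have -> : Complex a 0 = rc a by [].
  rewrite /root horner_map -(rmorph0 rc) => /eqP h.
  by apply/eqP; apply: complexI.
right.
pose z : R[i] := Complex a b; pose zb : R[i] := Complex a (- b).
have hz' : root (map_poly rc p) z by [].
have hzb : root (map_poly rc p) zb.
  have -> : zb = conjc z by [].
  have e : map_poly conjc (map_poly rc p) = map_poly rc p.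
    rewrite -map_poly_comp; apply: eq_map_poly => c /=.
    by rewrite /conjc /= oppr0.
  by rewrite /root -e horner_map (rootP hz') rmorph0.
have uq : uniq_roots [:: z; zb].
  rewrite uniq_rootsE /= andbT inE; apply/eqP => -[] /eqP.
  by rewrite -subr_eq0 opprK -mulr2n mulrn_eq0 /= (negPf hb).
have hall : all (root (map_poly rc p)) [:: z; zb] by rewrite /= hz' hzb.
have [r' hr'] := uniq_roots_prod_XsubC hall uq.
set q := ('X - a%:P)^+2 + (b^+2)%:P.
have hq : map_poly rc q = \prod_(w <- [:: z; zb]) ('X - w%:P).
  rewrite big_cons big_cons big_nil mulr1.
  have ez : z = rc a + I * rc b := complexE z.
  have ezb : zb = rc a - I * rc b.
    by rewrite (complexE zb) /= rmorphN mulrN.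
  rewrite ez ezb /q rmorphD rmorphXn rmorphB /= map_polyX !map_polyC /= rmorphXn.
  have hI : ((I)%:P)^+2 = -1 :> {poly R[i]} by rewrite -rmorphXn sqr_i rmorphN1.
  rewrite !rmorphD rmorphN !rmorphM /=.
  transitivity (('X - (rc a)%:P) ^+ 2 - (((I)%:P)^+2) * (rc b)%:P ^+ 2); last by ring.
  by rewrite hI; ring.
have hd : q %| p.
  by rewrite -(dvdp_map rc) hq hr' dvdp_mull.
by exists a, b, (p %/ q); split => //; rewrite divpK.
Qed.
End C.

Module Spec.

Section Spec.
Variables (R : realType) (A : lmodType R) (am : A -> A -> A) (ev : {poly R} -> A).
Hypotheses (evD : forall p q, ev (p + q) = ev p + ev q)
  (evZ : forall a p, ev (a *: p) = a *: ev p)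
  (evM : forall p q, ev (p * q) = am (ev p) (ev q))
  (am0l : forall b, am 0 b = 0)
  (fr : forall a b, am a a + am b b = 0 -> a = 0).

Lemma ev0 : ev 0 = 0.
Proof. by have := evZ 0 0; rewrite !scale0r. Qed.
Lemma evB p q : ev (p - q) = ev p - ev q.
Proof. by rewrite evD -[- q]scaleN1r evZ scaleN1r. Qed.
Lemma ev_sum (I : Type) (r : seq I) (P : pred I) (F : I -> {poly R}) :
  ev (\sum_(i <- r | P i) F i) = \sum_(i <- r | P i) ev (F i).
Proof. exact: (big_morph ev evD ev0). Qed.
Lemma fr1 a : am a a = 0 -> a = 0.
Proof. by move=> h; apply: (fr (b := 0)); rewrite h am0l addr0. Qed.

Lemma exists_min : (exists p : {poly R}, p != 0 /\ ev p = 0) ->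
  exists m : {poly R}, [/\ m != 0, ev m = 0 & forall q : {poly R}, q != 0 -> (size q < size m)%N -> ev q != 0].
Proof.
move=> [p [p0 ep]].
suff : forall n (p : {poly R}), (size p <= n)%N -> p != 0 -> ev p = 0 ->
  exists m : {poly R}, [/\ m != 0, ev m = 0 & forall q : {poly R}, q != 0 -> (size q < size m)%N -> ev q != 0].
  by move/(_ _ p (leqnn _) p0 ep).
elim=> [|n IH] {p p0 ep} p hs p0 ep.
  by move: p0; rewrite -size_poly_gt0 leqNgt (leq_ltn_trans hs) ?ltnSn.
case: (classic (exists q : {poly R}, [/\ q != 0, (size q < size p)%N & ev q = 0])).
  move=> [q [q0 qs eq]]; apply: (IH q) => //.
  by rewrite -ltnS (leq_trans qs hs).
move=> hn; exists p; split => // q q0 qs; apply/eqP => eq.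
by apply: hn; exists q.
Qed.

Variable m : {poly R}.
Hypotheses (m0 : m != 0) (evm : ev m = 0)
  (mmin : forall q : {poly R}, q != 0 -> (size q < size m)%N -> ev q != 0).

Lemma ev_mul_m (q : {poly R}) : ev (m * q) = 0.
Proof. by rewrite evM evm am0l. Qed.

Lemma dvd_ne0 (p : {poly R}) : p %| m -> p != 0.
Proof. by apply: contraTneq => ->; rewrite dvd0p. Qed.

Lemma size_q (a b : R) : size (('X - a%:P)^+2 + (b^+2)%:P) = 3%N.
Proof.
rewrite size_polyDl size_exp_XsubC //.
by rewrite (leq_ltn_trans (size_polyC_leq1 _)).
Qed.

Lemma no_quad (p : {poly R}) (a b : R) (r : {poly R}) : p %| m -> b != 0 -> p <> r * (('X - a%:P)^+2 + (b^+2)%:P).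
Proof.
move=> pm b0 hp.
set q := ('X - a%:P)^+2 + (b^+2)%:P in hp.
have q0 : q != 0 by rewrite -size_poly_gt0 size_q.
set s := m %/ p.
have em : m = s * r * q by rewrite -mulrA -hp divpK.
have sr0 : s * r != 0 by apply: contra_neq m0 => h; rewrite em h mul0r.
have hsz : (size (s * r)%R < size m)%N.
  by rewrite em (size_mul sr0 q0) /q size_q addn3 /= ltnS leqnSn.
have := mmin sr0 hsz; apply/negP; rewrite negbK.
set y := s * r.
have h1 : am (ev (b%:P * y)) (ev (b%:P * y)) + am (ev (('X - a%:P) * y)) (ev (('X - a%:P) * y)) = 0.
  rewrite -!evM -evD.
  have -> : b%:P * y * (b%:P * y) + ('X - a%:P) * y * (('X - a%:P) * y) = m * y.
    by rewrite em -/y /q rmorphXn /=; ring.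
  exact: ev_mul_m.
have := fr h1; rewrite mul_polyC evZ => /eqP; rewrite scaler_eq0 (negPf b0) /=.
done.
Qed.

Lemma root_ex (p : {poly R}) : p %| m -> (1 < size p)%N -> exists l, root p l.
Proof.
move=> pm sp; case: (real_root_or_quad sp) => // -[a [b [r [b0 hp]]]].
by case: (no_quad pm b0 hp).
Qed.

Lemma split_dvd (p : {poly R}) : p %| m -> exists rs, p = lead_coef p *: \prod_(l <- rs) ('X - l%:P).
Proof.
suff : forall n (p : {poly R}), (size p <= n)%N -> p %| m -> exists rs, p = lead_coef p *: \prod_(l <- rs) ('X - l%:P).
  by move/(_ _ p (leqnn _)).
elim=> [|n IH] {}p hs pm.
  by move: (dvd_ne0 pm); rewrite -size_poly_gt0 leqNgt (leq_ltn_trans hs) ?ltnSn.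
case: (leqP (size p) 1) => sp.
  exists [::]; rewrite big_nil {1}(size1_polyC sp) -alg_polyC; congr (_ *: 1).
  by rewrite /lead_coef; case: (size p) sp => [|[|]].
have [l hl] := root_ex pm sp.
have [p' hp'] := factor_theorem p l hl.
have p'm : p' %| m by apply: dvdp_trans pm; rewrite hp' dvdp_mulr.
have p'0 := dvd_ne0 p'm.
have sp' : (size p' <= n)%N.
  move: hs; rewrite hp' size_mul ?polyXsubC_eq0 // size_XsubC addn2 /= ltnS.
  done.
have [rs' hrs'] := IH p' sp' p'm.
exists (l :: rs'); rewrite big_cons hp' lead_coef_Mmonic ?monicXsubC //.
by rewrite {1}hrs' -scalerAl mulrC.
Qed.

Lemma not_uniq_perm (T : eqType) (rs : seq T) : ~~ uniq rs ->
  exists l rest, perm_eq rs (l :: l :: rest).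
Proof.
elim: rs => [|a s IH] //=; rewrite negb_and negbK.
case/orP => [ha | hs].
  by exists a, (rem a s); rewrite perm_cons perm_to_rem.
have [l [rest hp]] := IH hs; exists l, (a :: rest).
rewrite (perm_trans (y := a :: l :: l :: rest)) ?perm_cons //.
by apply/permP => q /=; rewrite addnCA; congr (_ + _)%N; rewrite addnCA.
Qed.

Lemma m_split : exists rs, uniq rs /\ m = lead_coef m *: \prod_(l <- rs) ('X - l%:P).
Proof.
have [rs hrs] := split_dvd (dvdpp m).
exists rs; split => //; apply/negP => /negP hn.
have [l [rest hp]] := not_uniq_perm hn.
rewrite (perm_big _ hp) /= !big_cons in hrs.
set c := lead_coef m in hrs; set P := \prod_(j <- rest) ('X - j%:P) in hrs.
set r := c *: (('X - l%:P) * P).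
have hmr : m = ('X - l%:P) * r by rewrite hrs /r -scalerAr mulrA.
have r0 : r != 0 by apply: contra_neq m0 => h; rewrite hmr h mulr0.
have hsz : (size r < size m)%N.
  by rewrite hmr size_mul ?polyXsubC_eq0 // size_XsubC.
have := mmin r0 hsz; apply/negP; rewrite negbK; apply/eqP/fr1.
rewrite -evM.
have -> : r * r = m * (c *: P) by rewrite hmr /r -!mul_polyC; ring.
exact: ev_mul_m.
Qed.

Lemma lagrange : exists rs : seq R, exists cs : R -> A,
  (forall l, l \in rs -> am (cs l) (cs l) = cs l /\ cs l != 0) /\
  ev 'X^2 = \sum_(l <- rs) l^+2 *: cs l.
Proof.
have [rs [urs hm]] := m_split; set c := lead_coef m in hm.
have c0 : c != 0 by rewrite lead_coef_eq0.
pose Pr l := \prod_(k <- rs | k != l) ('X - k%:P).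
pose ell l := (\prod_(k <- rs | k != l) (l - k))^-1 *: Pr l.
have ellE : forall l mu, l \in rs -> mu \in rs -> (ell l).[mu] = (mu == l)%:R.
  move=> l mu hl hmu; rewrite /ell hornerZ /Pr horner_prod.
  rewrite [X in _ * X](eq_bigr (fun k => mu - k)); last by move=> k _; rewrite hornerXsubC.
  case: (eqVneq mu l) => [-> | hne].
    rewrite mulVf //; rewrite prodf_seq_neq0; apply/allP => k _; apply/implyP => hk.
    by rewrite subr_eq0 eq_sym.
  rewrite -[X in _ * X]big_filter [X in _ * X](bigD1_seq mu) ?filter_uniq ?mem_filter ?hne //=.
  by rewrite subrr mul0r mulr0.
have vanish : forall q, (forall mu, mu \in rs -> q.[mu] = 0) -> ev q = 0.
  move=> q hq.
  have hall : all (root q) rs by apply/allP => mu hmu; apply/rootP; exact: hq.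
  have urs2 : uniq_roots rs by rewrite uniq_rootsE.
  have [r hr] := uniq_roots_prod_XsubC hall urs2.
  have -> : q = m * (c^-1 *: r).
    by rewrite hr hm -scalerAl -scalerAr scalerA mulfV // scale1r mulrC.
  exact: ev_mul_m.
exists rs, (fun l => ev (ell l)); split.
  move=> l hl; split.
    apply/eqP; rewrite -subr_eq0 -evM -evB; apply/eqP/vanish => mu hmu.
    by rewrite hornerD hornerN hornerM ellE //; case: (mu == l); rewrite /= ?mulr1 ?mulr0 subrr.
  apply: mmin.
    apply/eqP => h; have := ellE l l hl hl; rewrite h horner0 eqxx => /eqP.
    by rewrite eq_sym oner_eq0.
  rewrite (leq_ltn_trans (size_scale_leq _ _)) //.
  rewrite /Pr -big_filter size_prod_XsubC hm size_scale // size_prod_XsubC ltnS.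
  have hc : (0 < count (pred1 l) rs)%N by rewrite -has_count has_pred1.
  rewrite size_filter (@eq_count _ _ (predC (pred1 l))); last by move=> k.
  by rewrite -(count_predC (pred1 l) rs) -[X in (X < _)%N]add0n ltn_add2r.
have h2 : ev ('X^2 - \sum_(l <- rs) l^+2 *: ell l) = 0.
  apply: vanish => mu hmu; rewrite hornerD hornerN hornerXn horner_sum.
  rewrite (eq_big_seq (fun l => l^+2 * (mu == l)%:R)); last first.
    by move=> l hl; rewrite hornerZ ellE.
  rewrite (bigD1_seq mu) //= eqxx mulr1 big1 ?addr0 ?subrr // => l hl.
  by rewrite eq_sym (negPf hl) mulr0.
move: h2; rewrite evB ev_sum => /eqP; rewrite subr_eq0 => /eqP ->.
by apply: eq_bigr => l _; rewrite evZ.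
Qed.
End Spec.

End Spec.

Section J.
Variables (R : realType) (V : vectType R) (mul : V -> V -> V) (one : V).
Hypothesis hJ : unital_jordan mul one.
Hypothesis hfr : formally_real mul.
Local Notation "x ⊙ y" := (mul x y) (at level 40, left associativity).

Lemma mulZDr a x y z : x ⊙ (a *: y + z) = a *: (x ⊙ y) + x ⊙ z.
Proof. by case: hJ. Qed.
Lemma mulC x y : x ⊙ y = y ⊙ x. Proof. by case: hJ. Qed.
Lemma jord x y : (x ⊙ y) ⊙ (x ⊙ x) = x ⊙ (y ⊙ (x ⊙ x)). Proof. by case: hJ. Qed.
Lemma mul1l x : one ⊙ x = x. Proof. by case: hJ. Qed.
Lemma mul1r x : x ⊙ one = x. Proof. by rewrite mulC mul1l. Qed.
Lemma mulDr x y z : x ⊙ (y + z) = x ⊙ y + x ⊙ z.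
Proof. by rewrite -[y in LHS]scale1r mulZDr scale1r. Qed.
Lemma mul0r x : x ⊙ 0 = 0.
Proof. have h : x ⊙ 0 + x ⊙ 0 = x ⊙ 0 + 0 by rewrite -mulDr !addr0. exact: (addrI _ h). Qed.
Lemma mulZr a x y : x ⊙ (a *: y) = a *: (x ⊙ y).
Proof. by rewrite -[a *: y]addr0 mulZDr mul0r addr0. Qed.
Lemma mulNr x y : x ⊙ (- y) = - (x ⊙ y).
Proof. by rewrite -scaleN1r mulZr scaleN1r. Qed.
Lemma mulBr x y z : x ⊙ (y - z) = x ⊙ y - x ⊙ z.
Proof. by rewrite mulDr mulNr. Qed.
Lemma mulMnr x y n : x ⊙ (y *+ n) = (x ⊙ y) *+ n.
Proof. by elim: n => [|n IH]; rewrite ?mulr0n ?mul0r // !mulrS mulDr IH. Qed.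
Lemma mulDl x y z : (y + z) ⊙ x = y ⊙ x + z ⊙ x.
Proof. by rewrite !(mulC _ x) mulDr. Qed.
Lemma mul0l x : 0 ⊙ x = 0. Proof. by rewrite mulC mul0r. Qed.
Lemma mulZl a x y : (a *: y) ⊙ x = a *: (y ⊙ x).
Proof. by rewrite !(mulC _ x) mulZr. Qed.
Lemma mulNl x y : (- y) ⊙ x = - (y ⊙ x).
Proof. by rewrite !(mulC _ x) mulNr. Qed.
Lemma mulBl x y z : (y - z) ⊙ x = y ⊙ x - z ⊙ x.
Proof. by rewrite !(mulC _ x) mulBr. Qed.
Lemma mulMnl x y n : (y *+ n) ⊙ x = (y ⊙ x) *+ n.
Proof. by rewrite !(mulC _ x) mulMnr. Qed.

Definition expE := (mulDl, mulDr, mulBl, mulBr, mulNl, mulNr, mulZl, mulZr, mulMnl, mulMnr, mul0l, mul0r).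

Lemma two_inj (v : V) : v *+ 2 = 0 -> v = 0.
Proof. by move=> /eqP; rewrite -scaler_nat scaler_eq0 pnatr_eq0 /= => /eqP. Qed.

(* once-linearized Jordan identity *)
Lemma linJ x y z : (z ⊙ y) ⊙ (x ⊙ x) + (x ⊙ y) ⊙ (x ⊙ z) *+ 2
  = z ⊙ (y ⊙ (x ⊙ x)) + x ⊙ (y ⊙ (x ⊙ z)) *+ 2.
Proof.
have h1 := jord (x + z) y; have h2 := jord (x - z) y; have h4 := jord z y.
apply/eqP; rewrite -subr_eq0; apply/eqP/two_inj.
have -> : ((z ⊙ y) ⊙ (x ⊙ x) + (x ⊙ y) ⊙ (x ⊙ z) *+ 2 - (z ⊙ (y ⊙ (x ⊙ x)) + x ⊙ (y ⊙ (x ⊙ z)) *+ 2)) *+ 2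
  = ((x + z) ⊙ y ⊙ ((x + z) ⊙ (x + z)) - (x + z) ⊙ (y ⊙ ((x + z) ⊙ (x + z)))) - 
    ((x - z) ⊙ y ⊙ ((x - z) ⊙ (x - z)) - (x - z) ⊙ (y ⊙ ((x - z) ⊙ (x - z)))) - 
    ((z ⊙ y) ⊙ (z ⊙ z) - z ⊙ (y ⊙ (z ⊙ z))) *+ 2.
  rewrite ?expE [z ⊙ x]mulC.
  by apply: (@inj_inj R V); rewrite !injE; ring.
by rewrite h1 h2 h4 !subrr mul0rn subrr.
Qed.

Lemma linJ' x y z : z ⊙ (y ⊙ (x ⊙ x)) = (z ⊙ y) ⊙ (x ⊙ x) + (x ⊙ y) ⊙ (x ⊙ z) *+ 2 - x ⊙ (y ⊙ (x ⊙ z)) *+ 2.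
Proof. by rewrite linJ addrK. Qed.

Lemma linJ2 x u y z : (z ⊙ y) ⊙ (x ⊙ u) + (x ⊙ y) ⊙ (u ⊙ z) + (u ⊙ y) ⊙ (x ⊙ z)
  = z ⊙ (y ⊙ (x ⊙ u)) + x ⊙ (y ⊙ (u ⊙ z)) + u ⊙ (y ⊙ (x ⊙ z)).
Proof.
have h1 := linJ (x + u) y z; have h2 := linJ x y z; have h3 := linJ u y z.
apply/eqP; rewrite -subr_eq0; apply/eqP/two_inj.
have -> : ((z ⊙ y) ⊙ (x ⊙ u) + (x ⊙ y) ⊙ (u ⊙ z) + (u ⊙ y) ⊙ (x ⊙ z)
  - (z ⊙ (y ⊙ (x ⊙ u)) + x ⊙ (y ⊙ (u ⊙ z)) + u ⊙ (y ⊙ (x ⊙ z)))) *+ 2 =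
  ((z ⊙ y) ⊙ ((x + u) ⊙ (x + u)) + ((x + u) ⊙ y) ⊙ ((x + u) ⊙ z) *+ 2
  - (z ⊙ (y ⊙ ((x + u) ⊙ (x + u))) + (x + u) ⊙ (y ⊙ ((x + u) ⊙ z)) *+ 2))
  - ((z ⊙ y) ⊙ (x ⊙ x) + (x ⊙ y) ⊙ (x ⊙ z) *+ 2 - (z ⊙ (y ⊙ (x ⊙ x)) + x ⊙ (y ⊙ (x ⊙ z)) *+ 2))
  - ((z ⊙ y) ⊙ (u ⊙ u) + (u ⊙ y) ⊙ (u ⊙ z) *+ 2 - (z ⊙ (y ⊙ (u ⊙ u)) + u ⊙ (y ⊙ (u ⊙ z)) *+ 2)).
  rewrite ?expE [u ⊙ x]mulC.
  by apply: (@inj_inj R V); rewrite !injE; ring.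
by rewrite h1 h2 h3 !subrr.
Qed.

Section Sym.
Variable s : V.
Hypothesis hs : s ⊙ s = one.

Lemma S1 y z : (s ⊙ y) ⊙ (s ⊙ z) = s ⊙ (y ⊙ (s ⊙ z)).
Proof.
have h := linJ' s y z; rewrite hs !mul1r in h.
apply/eqP; rewrite -subr_eq0; apply/eqP/two_inj.
rewrite mulrnBl; apply: (addrI (z ⊙ y)); by rewrite addr0 addrA -h.
Qed.

Lemma S3 z : s ⊙ (s ⊙ (s ⊙ z)) = s ⊙ z.
Proof. by rewrite -S1 hs mul1l. Qed.

Definition P a := s ⊙ (s ⊙ a).
Lemma P_idem a : P (P a) = P a.
Proof. by rewrite /P S3. Qed.
Lemma sBP a : s ⊙ (a - P a) = 0.
Proof. by rewrite mulBr /P S3 subrr. Qed.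

Lemma comm_plus u y : P u = u -> u ⊙ (s ⊙ y) = s ⊙ (u ⊙ y).
Proof. move=> hu; rewrite -hu /P. rewrite [LHS]mulC S1 [y ⊙ _]mulC. done. Qed.

Lemma P_pp u u' : P u = u -> P u' = u' -> P (u ⊙ u') = u ⊙ u'.
Proof. by move=> hu hu'; rewrite {1}/P -(comm_plus u' hu) -(comm_plus _ hu) -/(P u') hu'. Qed.
Lemma s_pm u w : P u = u -> s ⊙ w = 0 -> s ⊙ (u ⊙ w) = 0.
Proof. by move=> hu hw; rewrite -(comm_plus _ hu) hw mul0r. Qed.
Lemma P_mm w w' : s ⊙ w = 0 -> s ⊙ w' = 0 -> P (w ⊙ w') = w ⊙ w'.
Proof.
move=> hw hw'; have := linJ2 s w s w'.
by rewrite hs mul1l hw hw' !mul0r !add0r !addr0 => h; rewrite /P -h.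
Qed.

Lemma PD a b : P (a + b) = P a + P b. Proof. by rewrite /P !mulDr. Qed.

Lemma P_decomp u w u' w' : P u = u -> s ⊙ w = 0 -> P u' = u' -> s ⊙ w' = 0 ->
  P ((u + w) ⊙ (u' + w')) = u ⊙ u' + w ⊙ w'.
Proof.
move=> hu hw hu' hw'; rewrite mulDl !mulDr !PD (P_pp hu hu') (P_mm hw hw').
have h1 : P (u ⊙ w') = 0 by rewrite /P (s_pm hu hw') mul0r.
have h2 : P (w ⊙ u') = 0 by rewrite mulC /P (s_pm hu' hw) mul0r.
by rewrite h1 h2 addr0 add0r.
Qed.

Definition U a := P a *+ 2 - a.

Lemma U_mul a b : U (a ⊙ b) = U a ⊙ U b.
Proof.
have e : P (a ⊙ b) = P a ⊙ P b + (a - P a) ⊙ (b - P b).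
  have ha : a = P a + (a - P a) by rewrite addrC subrK.
  have hb : b = P b + (b - P b) by rewrite addrC subrK.
  by rewrite {1}ha {1}hb P_decomp // ?P_idem // sBP.
rewrite /U e; rewrite ?expE.
by apply: (@inj_inj R V); rewrite !injE; ring.
Qed.

Lemma U_inv a : U (U a) = a.
Proof.
rewrite /U [P (_ - _)]/P ?expE -/(P a) -/(P (P a)) P_idem.
by apply: (@inj_inj R V); rewrite !injE; ring.
Qed.

Lemma U_lin k a b : U (k *: a + b) = k *: U a + U b.
Proof.
rewrite /U /P ?expE.
by apply: (@inj_inj R V); rewrite !injE; ring.
Qed.

Lemma U_one : U one = one.
Proof. by rewrite /U /P mul1r hs mulr2n addrK. Qed.

Lemma U_L a z : U a ⊙ z = U (a ⊙ U z).
Proof. by rewrite U_mul U_inv. Qed.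
End Sym.

Lemma jordC x z : (x ⊙ x) ⊙ (x ⊙ z) = x ⊙ ((x ⊙ x) ⊙ z).
Proof. by rewrite mulC jord [_ ⊙ (x ⊙ x)]mulC. Qed.

Definition commute a b := forall z, a ⊙ (b ⊙ z) = b ⊙ (a ⊙ z).

Lemma fr2 a b : a ⊙ a + b ⊙ b = 0 -> a = 0.
Proof.
move=> h; apply: (hfr (s := [:: a; b])); last by rewrite mem_head.
by rewrite !big_cons big_nil addr0.
Qed.
Lemma fr1 a : a ⊙ a = 0 -> a = 0.
Proof. by move=> h; apply: (@fr2 a 0); rewrite h mul0r addr0. Qed.

Section Pow.
Variable x : V.

Fixpoint pw n := if n is n'.+1 then x ⊙ pw n' else one.

Lemma pwQ n : (x ⊙ x) ⊙ pw n = pw n.+2.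
Proof.
elim: n => [|n IH]; first by rewrite /= !mul1r.
by rewrite [pw n.+1]/= jordC IH.
Qed.

Lemma pwE n z : pw n.+2 ⊙ z = (x ⊙ x) ⊙ (pw n ⊙ z) + pw n.+1 ⊙ (x ⊙ z) *+ 2 - x ⊙ (pw n ⊙ (x ⊙ z)) *+ 2.
Proof.
rewrite -pwQ mulC [(x ⊙ x) ⊙ _]mulC linJ' [z ⊙ _]mulC [_ ⊙ (x ⊙ x)]mulC [x ⊙ pw n]mulC.
by rewrite [pw n ⊙ x]mulC.
Qed.

Lemma commute_lin a b : commute a b -> commute b a.
Proof. by move=> h z; rewrite h. Qed.

Lemma comm_step c n : commute c x -> commute c (x ⊙ x) -> commute c (pw n) -> commute c (pw n.+1) ->
  commute c (pw n.+2).
Proof.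
move=> h1 h2 h3 h4 z; rewrite !pwE ?expE.
by do 10?[rewrite h1 | rewrite h2 | rewrite h3 | rewrite h4].
Qed.

Lemma comm_refl a : commute a a. Proof. by []. Qed.
Lemma comm_x_xx : commute x (x ⊙ x). Proof. by move=> z; rewrite jordC. Qed.

Lemma pw_comm n : commute (pw n) x /\ commute (pw n) (x ⊙ x).
Proof.
suff : (commute (pw n) x /\ commute (pw n) (x ⊙ x)) /\
       (commute (pw n.+1) x /\ commute (pw n.+1) (x ⊙ x)) by case.
elim: n => [|n [[h1 h2] [h3 h4]]].
  rewrite /= mul1r; split; split => z; rewrite ?mul1l //.
  by rewrite comm_x_xx.
split; first by split.
split; apply: commute_lin; apply: comm_step; rewrite ?mul1r //;
  try apply: commute_lin; rewrite //; try exact: comm_x_xx.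
exact: commute_lin comm_x_xx.
Qed.

Lemma pw_add p q : pw p ⊙ pw q = pw (p + q).
Proof.
elim: q => [|q IH]; first by rewrite /= mul1r addn0.
by rewrite addnS /= (proj1 (pw_comm p)) IH.
Qed.

Definition ev (p : {poly R}) : V := \sum_(i < size p) p`_i *: pw i.

Lemma ev_wide (p : {poly R}) n : (size p <= n)%N -> ev p = \sum_(i < n) p`_i *: pw i.
Proof.
move=> hn; rewrite /ev (big_ord_widen n (fun i => p`_i *: pw i) hn) big_mkcond /=.
apply: eq_bigr => i _; case: ifP => // /negbT; rewrite -leqNgt => h.
by rewrite nth_default // scale0r.
Qed.

Lemma ev_lin a (p q : {poly R}) : ev (a *: p + q) = a *: ev p + ev q.
Proof.
set n := maxn (size p) (size q).
have hp : (size p <= n)%N by rewrite leq_maxl.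
have hq : (size q <= n)%N by rewrite leq_maxr.
have hpq : (size (a *: p + q)%R <= n)%N.
  by rewrite (leq_trans (size_polyD _ _)) // geq_max (leq_trans (size_scale_leq _ _) hp) hq.
rewrite (ev_wide hpq) (ev_wide hp) (ev_wide hq) scaler_sumr -big_split /=.
by apply: eq_bigr => i _; rewrite coefD coefZ scalerDl scalerA.
Qed.

Lemma ev0 : ev 0 = 0. Proof. by rewrite (@ev_wide 0 0) ?size_poly0 // big_ord0. Qed.
Lemma evD (p q : {poly R}) : ev (p + q) = ev p + ev q.
Proof. by have := ev_lin 1 p q; rewrite !scale1r. Qed.
Lemma evZ a (p : {poly R}) : ev (a *: p) = a *: ev p.
Proof. by rewrite -[a *: p]addr0 ev_lin ev0 addr0. Qed.
Lemma evN (p : {poly R}) : ev (- p) = - ev p.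
Proof. by rewrite -scaleN1r evZ scaleN1r. Qed.
Lemma evB (p q : {poly R}) : ev (p - q) = ev p - ev q.
Proof. by rewrite evD evN. Qed.
Lemma ev_sum (I : Type) (r : seq I) (P : pred I) (F : I -> {poly R}) :
  ev (\sum_(i <- r | P i) F i) = \sum_(i <- r | P i) ev (F i).
Proof. exact: (big_morph ev evD ev0). Qed.

Lemma evXn n : ev 'X^n = pw n.
Proof.
rewrite /ev size_polyXn big_ord_recr /= coefXn eqxx scale1r big1 ?add0r // => i _.
by rewrite coefXn ltn_eqF // scale0r.
Qed.

Lemma evC c : ev c%:P = c *: one.
Proof. by rewrite (@ev_wide _ 1) ?size_polyC ?leq_b1 // big_ord1 coefC. Qed.

Lemma mul_suml (I : Type) (r : seq I) (P : pred I) (F : I -> V) b :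
  (\sum_(i <- r | P i) F i) ⊙ b = \sum_(i <- r | P i) F i ⊙ b.
Proof. exact: (big_morph (fun a => a ⊙ b) (fun u v => mulDl b u v) (mul0l b)). Qed.
Lemma mul_sumr (I : Type) (r : seq I) (P : pred I) (F : I -> V) b :
  b ⊙ (\sum_(i <- r | P i) F i) = \sum_(i <- r | P i) b ⊙ F i.
Proof. exact: (big_morph (fun a => b ⊙ a) (fun u v => mulDr b u v) (mul0r b)). Qed.

Lemma evM (p q : {poly R}) : ev (p * q) = ev p ⊙ ev q.
Proof.
rewrite -[p]coefK -[q]coefK !poly_def mulr_suml !ev_sum mul_suml.
apply: eq_bigr => i _; rewrite mulr_sumr ev_sum mul_sumr.
apply: eq_bigr => j _; rewrite -scalerAl -scalerAr -exprD !evZ !evXn.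
by rewrite mulZl mulZr pw_add.
Qed.

Lemma evX2 : ev 'X^2 = x ⊙ x.
Proof. by rewrite evXn /= mul1r. Qed.

Lemma ev_annih : exists p : {poly R}, p != 0 /\ ev p = 0.
Proof.
set n := dim V.
pose X := [tuple pw i | i < n.+1].
have nf : ~~ free X.
  rewrite /free size_tuple; apply/negP => /eqP h.
  have := dimvS (subvf <<X>>%VS); rewrite dimvf h -/n ltnn.
  by [].
have : ~ (forall k, \sum_(i < n.+1) k i *: X`_i = 0 -> (forall i, k i = 0)).
  by move/freeP => h; rewrite h in nf.
move=> /not_all_ex_not [k hk].
have hs := not_imply_elim _ _ hk; have hi := not_imply_elim2 _ _ hk.
have [i ki] : exists i, k i != 0.
  by apply: NNPP => h; apply: hi => i; apply/eqP/negPn/negP => h'; apply: h; exists i.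
exists (\poly_(j < n.+1) k (inord j)); split.
  apply/eqP => h0; have := congr1 (fun p : {poly R} => p`_i) h0; rewrite /= coef_poly ltn_ord inord_val coef0.
  by move/eqP; rewrite (negPf ki).
rewrite (@ev_wide _ n.+1) ?size_poly //; rewrite -[RHS]hs; apply: eq_bigr => j _.
by rewrite coef_poly ltn_ord inord_val -tnth_nth tnth_mktuple.
Qed.

Lemma spectral_x : exists rs : seq R, exists cs : R -> V,
  (forall l, l \in rs -> cs l ⊙ cs l = cs l /\ cs l != 0) /\
  x ⊙ x = \sum_(l <- rs) l^+2 *: cs l.
Proof.
have [m [m0 evm mmin]] := Spec.exists_min ev_annih.
have := Spec.lagrange evD evZ evM mul0l fr2 m0 evm mmin.
by rewrite evX2.
Qed.
End Pow.

Definition tr_el a := trf (fun z => a ⊙ z).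

Lemma lin_L a : lin (fun z => a ⊙ z).
Proof. by move=> k u v; rewrite mulZDr. Qed.

Lemma tr_elD a b : tr_el (a + b) = tr_el a + tr_el b.
Proof. by rewrite /tr_el -trfD; apply: trf_ext => z; rewrite mulDl. Qed.
Lemma tr_elZ k a : tr_el (k *: a) = k * tr_el a.
Proof. by rewrite /tr_el -trfZ; apply: trf_ext => z; rewrite mulZl. Qed.
Lemma tr_el0 : tr_el 0 = 0.
Proof. by have := tr_elZ 0 0; rewrite scale0r GRing.mul0r. Qed.
Lemma tr_elN a : tr_el (- a) = - tr_el a.
Proof. by rewrite -scaleN1r tr_elZ mulN1r. Qed.
Lemma tr_elB a b : tr_el (a - b) = tr_el a - tr_el b.
Proof. by rewrite tr_elD tr_elN. Qed.
Lemma tr_elMn a n : tr_el (a *+ n) = tr_el a *+ n.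
Proof. by elim: n => [|n IH]; rewrite ?mulr0n ?tr_el0 // !mulrS tr_elD IH. Qed.
Lemma tr_el_sum (I : Type) (r : seq I) (P : pred I) (F : I -> V) :
  tr_el (\sum_(i <- r | P i) F i) = \sum_(i <- r | P i) tr_el (F i).
Proof. exact: (big_morph tr_el tr_elD tr_el0). Qed.

Section Idem.
Variable c : V.
Hypotheses (hc : c ⊙ c = c) (c0 : c != 0).

Lemma h3 z : c ⊙ (c ⊙ (c ⊙ z)) *+ 2 = c ⊙ (c ⊙ z) *+ 3 - c ⊙ z.
Proof.
have h := linJ' c c z; rewrite !hc in h; rewrite [z ⊙ c]mulC [c ⊙ z ⊙ c]mulC in h.
rewrite [X in _ = _ - X]h; apply: (@inj_inj R V); rewrite !injE; ring.
Qed.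

Definition P1 z := c ⊙ (c ⊙ z) *+ 2 - c ⊙ z.
Definition Ph z := (c ⊙ z - c ⊙ (c ⊙ z)) *+ 4.

Lemma lin_P1 : lin P1.
Proof. by move=> k u v; rewrite /P1 ?expE; apply: (@inj_inj R V); rewrite !injE; ring. Qed.
Lemma lin_Ph : lin Ph.
Proof. by move=> k u v; rewrite /Ph ?expE; apply: (@inj_inj R V); rewrite !injE; ring. Qed.

Lemma P1_idem z : P1 (P1 z) = P1 z.
Proof.
apply/eqP; rewrite -subr_eq0; apply/eqP.
have -> : P1 (P1 z) - P1 z = (c ⊙ (c ⊙ (c ⊙ (c ⊙ z))) *+ 2 - (c ⊙ (c ⊙ (c ⊙ z)) *+ 3 - c ⊙ (c ⊙ z))) *+ 2
   + (c ⊙ (c ⊙ (c ⊙ z)) *+ 2 - (c ⊙ (c ⊙ z) *+ 3 - c ⊙ z)).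
  by rewrite /P1 ?expE; apply: (@inj_inj R V); rewrite !injE; ring.
by rewrite (h3 (c ⊙ z)) h3 !subrr mul0rn addr0.
Qed.

Lemma Ph_idem z : Ph (Ph z) = Ph z.
Proof.
apply/eqP; rewrite -subr_eq0; apply/eqP.
have -> : Ph (Ph z) - Ph z = (c ⊙ (c ⊙ (c ⊙ (c ⊙ z))) *+ 2 - (c ⊙ (c ⊙ (c ⊙ z)) *+ 3 - c ⊙ (c ⊙ z))) *+ 8
   - (c ⊙ (c ⊙ (c ⊙ z)) *+ 2 - (c ⊙ (c ⊙ z) *+ 3 - c ⊙ z)) *+ 4.
  by rewrite /Ph ?expE; apply: (@inj_inj R V); rewrite !injE; ring.
by rewrite (h3 (c ⊙ z)) h3 !subrr !mul0rn subrr.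
Qed.

Lemma tr_idem_pos : 0 < tr_el c.
Proof.
have e : trf (fun z => 2%:R *: (c ⊙ z)) = trf (fun z => 2%:R *: P1 z + Ph z).
  by apply: trf_ext => z; rewrite /P1 /Ph !scaler_nat; apply: (@inj_inj R V); rewrite !injE; ring.
rewrite trfZ trfD trfZ in e.
have p1 : 0 < trf P1.
  apply: (@trf_idem_gt0 _ _ P1 c lin_P1 P1_idem).
  by rewrite /P1 !hc mulr2n addrK.
have p2 : 0 <= trf Ph by apply: trf_idem_ge0; [exact: lin_Ph | exact: Ph_idem].
have : 0 < 2%:R * tr_el c by rewrite /tr_el e ltr_wpDr // mulr_gt0.
by rewrite pmulr_rgt0.
Qed.
End Idem.

Lemma sum_pos (I : eqType) (r : seq I) (F : I -> R) i0 :
  (forall i, i \in r -> 0 <= F i) -> i0 \in r -> 0 < F i0 -> 0 < \sum_(i <- r) F i.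
Proof.
elim: r => [|a r IH] //= hF hi0 hF0; rewrite big_cons.
rewrite inE in hi0; case/orP: hi0 => [/eqP ha | hi0].
  apply: (@lt_le_trans _ _ (F a + 0)); first by rewrite addr0 -ha.
  rewrite lerD2l big_seq sumr_ge0 // => i hi; apply: hF.
  by rewrite inE hi orbT.
apply: (@lt_le_trans _ _ (0 + \sum_(i <- r) F i)).
  by rewrite add0r IH // => i hi; apply: hF; rewrite inE hi orbT.
by rewrite lerD2r hF // mem_head.
Qed.

Lemma tr_pos x : x != 0 -> 0 < tr_el (x ⊙ x).
Proof.
move=> x0; have [rs [cs [hcs hx]]] := spectral_x x.
case: (boolP (all (fun l => l == 0) rs)) => [/allP h0 | ].
  move: x0; apply: contraNT => _; apply/eqP/fr1.
  by rewrite hx big1_seq // => l /andP[_ hl]; rewrite (eqP (h0 l hl)) expr0n scale0r.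
case/allPn => l0 hl0 l00.
rewrite hx tr_el_sum; apply: (sum_pos (i0 := l0)) => //.
  move=> l hl; rewrite tr_elZ mulr_ge0 ?sqr_ge0 //.
  by have [h1 h2] := hcs l hl; apply: ltW; apply: tr_idem_pos.
rewrite tr_elZ mulr_gt0 //; first by rewrite lt_def sqrf_eq0 l00 sqr_ge0.
by have [h1 h2] := hcs l0 hl0; apply: tr_idem_pos.
Qed.

Lemma tr_U s a : s ⊙ s = one -> tr_el (U s a) = tr_el a.
Proof.
move=> hs; rewrite /tr_el (trf_ext (g := fun z => U s (a ⊙ U s z))); last by move=> z; rewrite U_L.
apply: trf_conj; first exact: lin_L.
  by move=> k u v; rewrite U_lin.
by move=> v; rewrite U_inv.
Qed.

Section Main.
Variable D : V -> V.
Hypothesis hD : two_local_1_automorphism mul one D.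

Lemma D_inv a b : tr_el (D a ⊙ D b) = tr_el (a ⊙ b).
Proof.
have [s [hs ha hb]] := hD a b.
have -> : D a = U s a by rewrite ha.
have -> : D b = U s b by rewrite hb.
by rewrite -U_mul // tr_U.
Qed.

Lemma D_sq a : D (a ⊙ a) = D a ⊙ D a.
Proof.
have [s [hs ha haa]] := hD a (a ⊙ a).
have -> : D a = U s a by rewrite ha.
have -> : D (a ⊙ a) = U s (a ⊙ a) by rewrite haa.
by rewrite U_mul.
Qed.

Definition trE := (tr_elD, tr_elB, tr_elN, tr_elZ, tr_elMn, tr_el0).

Lemma D_lin k a b : D (k *: a + b) = k *: D a + D b.
Proof.
have key : forall z, tr_el ((D z - (k *: D a + D b)) ⊙ (D z - (k *: D a + D b)))
  = tr_el ((z - (k *: a + b)) ⊙ (z - (k *: a + b))).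
  move=> z; rewrite ?expE ?trE !D_inv; ring.
have := key (k *: a + b); rewrite subrr mul0r tr_el0 => h0.
apply/eqP; rewrite -subr_eq0; apply/negPn/negP => hw.
by have := tr_pos hw; rewrite h0 ltxx.
Qed.

Lemma D_add a b : D (a + b) = D a + D b.
Proof. by have := D_lin 1 a b; rewrite !scale1r. Qed.

Lemma D_inj a b : D a = D b -> a = b.
Proof.
move=> hab.
have key : tr_el ((D a - D b) ⊙ (D a - D b)) = tr_el ((a - b) ⊙ (a - b)).
  by rewrite ?expE ?trE !D_inv.
move: key; rewrite hab subrr mul0r tr_el0 => /esym h0.
apply/eqP; rewrite -subr_eq0; apply/negPn/negP => hw.
by have := tr_pos hw; rewrite h0 ltxx.
Qed.

Lemma D_mul a b : D (a ⊙ b) = D a ⊙ D b.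
Proof.
have e := D_sq (a + b).
rewrite mulDl !mulDr [b ⊙ a]mulC !D_add !D_sq in e.
rewrite mulDl !mulDr [D b ⊙ D a]mulC in e.
apply/eqP; rewrite -subr_eq0; apply/eqP/two_inj.
have -> : (D (a ⊙ b) - D a ⊙ D b) *+ 2 =
  (D a ⊙ D a + D (a ⊙ b) + (D (a ⊙ b) + D b ⊙ D b)) -
  (D a ⊙ D a + D a ⊙ D b + (D a ⊙ D b + D b ⊙ D b)).
  by apply: (@inj_inj R V); rewrite !injE; ring.
by rewrite e subrr.
Qed.

Lemma D_bij : bijective D.
Proof.
have hl : lin D by move=> k u v; exact: D_lin.
set M := mxf D.
have D0 : D 0 = 0.
  have h := D_add 0 0; rewrite addr0 in h.
  by apply: (addrI (D 0)); rewrite addr0 -h.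
have uM : M \in unitmx.
  rewrite -row_free_unit; apply: inj_row_free => v hv.
  have : D (r2v v) = D 0 by rewrite D0; apply: v2r_inj; rewrite mxfP // r2vK hv linear0.
  by move/D_inj => h; rewrite -(r2vK v) h linear0.
exists (fun y => r2v (v2r y *m invmx M)).
  by move=> y; rewrite mxfP // mulmxK // v2rK.
by move=> y; apply: v2r_inj; rewrite mxfP // r2vK mulmxKV.
Qed.
End Main.
End J.

Theorem theorem5p7 (R : realType) (V : vectType R) (mul : V -> V -> V) (one : V)
  (hJ : unital_jordan mul one) (hfr : formally_real mul) (D : V -> V) :
  two_local_1_automorphism mul one D -> jordan_automorphism mul D.
Proof.
move=> hD; split.
- exact: (D_lin hJ hfr hD).
- exact: (D_bij hJ hfr hD).
- exact: (D_mul hJ hfr hD).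
Qed.
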